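(* For integers $n\ge 10$ and $1\le j\le n$ let $$A_j=\Big(\frac{n!}{(n-j)!}\Big)^2\frac{1}{j!}\exp\Big\{-2j\log n\Big(1-\frac jn\Big)-2j\Big\}.$$ Then $\sum_{j=1}^{\lfloor n/4\rfloor}A_j\le 2/3$ and $\sum_{j\in\mathbb Z,\ n/4\le j\le n/2}A_j\le 1/4$.
   Context: $\log$ denotes the natural logarithm. *)

(* Defs.v *)
From Stdlib Require Import Reals Lra Lia Arith List.
Open Scope R_scope.

Definition A (n j : nat) : R :=
  (INR (fact n) / INR (fact (n - j))) ^ 2 * / INR (fact j) *
  exp (- 2 * INR j * ln (INR n) * (1 - INR j / INR n) - 2 * INR j).

(* Sum of f j over the integers j in [a, b] (empty if b < a). *)
Definition sum_range (a b : nat) (f : nat -> R) : R :=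
  fold_right Rplus 0 (map f (seq a (S b - a))).

(* Main.v *)
Require Import Defs.
From Stdlib Require Import Reals Lra Lia Psatz Arith List ZArith.
Open Scope R_scope.

Lemma exp_mul_pow (y : R) (k : nat) : exp (INR k * y) = exp y ^ k.
Proof.
  induction k as [|k IH].
  - simpl. rewrite Rmult_0_l, exp_0; ring.
  - rewrite S_INR, Rmult_plus_distr_r, Rmult_1_l, exp_plus, IH; simpl; ring.
Qed.

Lemma ln_le_sub1 (y : R) : 0 < y -> ln y <= y - 1.
Proof.
  intro Hy. pose proof (exp_ineq1_le (ln y)). rewrite exp_ln in H; lra.
Qed.

Lemma ln_ge_1inv (y : R) : 0 < y -> 1 - / y <= ln y.
Proof.
  intro Hy. pose proof (ln_le_sub1 (/ y) (Rinv_0_lt_compat _ Hy)).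
  rewrite ln_Rinv in H by lra. lra.
Qed.

Lemma ln_le_mono (x y : R) : 0 < x -> x <= y -> ln x <= ln y.
Proof.
  intros Hx Hxy. destruct (Rle_lt_or_eq_dec _ _ Hxy) as [H|H].
  - left; apply ln_increasing; lra.
  - subst; lra.
Qed.

Lemma exp_lb_pow (y : R) (k : nat) : 0 <= y -> (0 < k)%nat ->
  (1 + y / INR k) ^ k <= exp y.
Proof.
  intros Hy Hk.
  assert (HK : 0 < INR k) by (apply lt_0_INR; lia).
  replace y with (INR k * (y / INR k)) at 2 by (field; lra).
  rewrite exp_mul_pow. apply pow_incr. split.
  - assert (0 <= y / INR k) by (unfold Rdiv; apply Rmult_le_pos; [lra|left; apply Rinv_0_lt_compat; lra]). lra.
  - apply exp_ineq1_le.
Qed.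

Lemma num_pow (a b c d : Z) (k : nat) : (0 < b)%Z -> (0 < d)%Z ->
  (c * b ^ Z.of_nat k <= d * a ^ Z.of_nat k)%Z ->
  IZR c / IZR d <= (IZR a / IZR b) ^ k.
Proof.
  intros Hb Hd H.
  unfold Rdiv. rewrite Rpow_mult_distr, pow_inv, !pow_IZR.
  assert (Hbk : (0 < b ^ Z.of_nat k)%Z) by (apply Z.pow_pos_nonneg; lia).
  apply IZR_lt in Hbk. apply IZR_lt in Hd. apply IZR_le in H.
  rewrite !mult_IZR in H.
  apply (Rmult_le_reg_r (IZR (b ^ Z.of_nat k) * IZR d)). nra.
  replace (IZR c * / IZR d * (IZR (b ^ Z.of_nat k) * IZR d)) with (IZR c * IZR (b ^ Z.of_nat k)) by (field; lra).
  replace (IZR (a ^ Z.of_nat k) * / IZR (b ^ Z.of_nat k) * (IZR (b ^ Z.of_nat k) * IZR d)) with (IZR d * IZR (a ^ Z.of_nat k)) by (field; lra).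
  lra.
Qed.

Lemma e_lb : 27/10 <= exp 1.
Proof.
  eapply Rle_trans; [|apply (exp_lb_pow 1 100); [lra|lia]].
  replace (1 + 1 / INR 100) with (IZR 101 / IZR 100)
    by (rewrite INR_IZR_INZ; simpl; field).
  apply num_pow; [lia|lia|]. vm_compute. discriminate.
Qed.

Lemma e14_lb : 4 <= exp (14/10).
Proof.
  eapply Rle_trans; [|apply (exp_lb_pow (14/10) 100); [lra|lia]].
  replace (1 + 14/10 / INR 100) with (IZR 1014 / IZR 1000)
    by (rewrite INR_IZR_INZ; simpl; field).
  replace 4 with (IZR 4 / IZR 1) by (simpl; field).
  apply num_pow; [lia|lia|]. vm_compute. discriminate.
Qed.

Lemma ln_div (x y : R) : 0 < x -> 0 < y -> ln (x / y) = ln x - ln y.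
Proof. intros. unfold Rdiv. rewrite ln_mult, ln_Rinv; try lra. apply Rinv_0_lt_compat; lra. Qed.

Lemma exp_le_mono (x y : R) : x <= y -> exp x <= exp y.
Proof. intro H. destruct (Rle_lt_or_eq_dec _ _ H). left; apply exp_increasing; lra. subst; lra. Qed.

Lemma ln3_ge1 : 1 <= ln 3.
Proof.
  rewrite <- (ln_exp 1) at 1. apply ln_le_mono. apply exp_pos. apply exp_le_3.
Qed.

Lemma lnn_decr_step (m : nat) : (3 <= m)%nat ->
  ln (INR (S m)) / INR (S m) <= ln (INR m) / INR m.
Proof.
  intro Hm.
  assert (H3 : 3 <= INR m) by (replace 3 with (INR 3) by (simpl; ring); apply le_INR; lia).
  rewrite S_INR.
  assert (Hl : ln (INR m + 1) - ln (INR m) <= 1 / INR m).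
  { rewrite <- ln_div by lra.
    pose proof (ln_le_sub1 ((INR m + 1) / INR m)).
    replace ((INR m + 1) / INR m - 1) with (1 / INR m) in H by (field; lra).
    apply H. apply Rdiv_lt_0_compat; lra. }
  assert (Hl3 : 1 <= ln (INR m)).
  { eapply Rle_trans. apply ln3_ge1. apply ln_le_mono; lra. }
  apply (Rmult_le_reg_r (INR m * (INR m + 1))). nra.
  replace (ln (INR m + 1) / (INR m + 1) * (INR m * (INR m + 1))) with (ln (INR m + 1) * INR m) by (field; lra).
  replace (ln (INR m) / INR m * (INR m * (INR m + 1))) with (ln (INR m) * (INR m + 1)) by (field; lra).
  replace (1 / INR m) with (/ INR m) in Hl by (field; lra).
  assert (ln (INR m + 1) * INR m <= (ln (INR m) + / INR m) * INR m) by (apply Rmult_le_compat_r; lra).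
  replace ((ln (INR m) + / INR m) * INR m) with (ln (INR m) * INR m + 1) in H by (field; lra).
  lra.
Qed.

Lemma lnn_decr (M n : nat) : (3 <= M)%nat -> (M <= n)%nat ->
  ln (INR n) / INR n <= ln (INR M) / INR M.
Proof.
  intros HM Hn. induction Hn as [|n Hn IH]. lra.
  eapply Rle_trans; [apply lnn_decr_step; lia| exact IH].
Qed.

Lemma fact_lb (j : nat) : (1 <= j)%nat ->
  exp (INR j * ln (INR j) - INR j + 1) <= INR (fact j).
Proof.
  intro Hj. induction Hj as [|j Hj IH].
  - simpl. replace (1 * ln 1 - 1 + 1) with 0 by (rewrite ln_1; ring). rewrite exp_0; lra.
  - assert (H1 : 1 <= INR j) by (replace 1 with (INR 1) by reflexivity; apply le_INR; lia).
    replace (fact (S j)) with (S j * fact j)%nat by reflexivity.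
    rewrite mult_INR. rewrite S_INR.
    assert (Hl : INR j * ln (INR j + 1) <= INR j * ln (INR j) + 1).
    { assert (ln (INR j + 1) - ln (INR j) <= / INR j).
      { rewrite <- ln_div by lra.
        pose proof (ln_le_sub1 ((INR j + 1) / INR j)).
        replace ((INR j + 1) / INR j - 1) with (/ INR j) in H by (field; lra).
        apply H. apply Rdiv_lt_0_compat; lra. }
      assert (INR j * (ln (INR j + 1) - ln (INR j)) <= INR j * / INR j) by (apply Rmult_le_compat_l; lra).
      rewrite Rinv_r in H0 by lra. lra. }
    replace ((INR j + 1) * ln (INR j + 1) - (INR j + 1) + 1)
      with (ln (INR j + 1) + (INR j * ln (INR j + 1) - INR j)) by ring.
    rewrite exp_plus, exp_ln by lra.
    apply Rmult_le_compat_l. lra.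
    eapply Rle_trans; [|exact IH].
    apply exp_le_mono. lra.
Qed.

Lemma fact_pos_R (k : nat) : 0 < INR (fact k).
Proof. apply lt_0_INR. apply lt_O_fact. Qed.

Lemma fact_split (n j : nat) : (S j <= n)%nat ->
  INR (fact (n - j)) = INR (n - j) * INR (fact (n - S j)).
Proof.
  intro H. replace (n - j)%nat with (S (n - S j)) by lia.
  rewrite <- mult_INR. f_equal.
Qed.

Lemma F_bound (n j : nat) : (0 < n)%nat -> (j <= n)%nat ->
  INR (fact n) / INR (fact (n - j)) <=
  exp (INR j * ln (INR n) - INR j * (INR j - 1) / (2 * INR n)).
Proof.
  intros Hn. induction j as [|j IH]; intro Hj.
  - rewrite Nat.sub_0_r. simpl INR. replace (0 * ln (INR n) - 0 * (0 - 1) / (2 * INR n)) with 0 by (field; apply not_0_INR; lia).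
    rewrite exp_0. pose proof (fact_pos_R n). right; field; lra.
  - assert (HN : 0 < INR n) by (apply lt_0_INR; lia).
    assert (Hnj : INR (n - j) = INR n - INR j) by (apply minus_INR; lia).
    assert (HjN : INR (S j) <= INR n) by (apply le_INR; lia).
    rewrite S_INR in HjN.
    assert (Hpos : 0 < INR (n - j)) by (apply lt_0_INR; lia).
    pose proof (fact_pos_R (n - S j)).
    replace (INR (fact n) / INR (fact (n - S j)))
      with ((INR (fact n) / INR (fact (n - j))) * INR (n - j)).
    2:{ rewrite (fact_split n j Hj). field. lra. }
    assert (IH' := IH ltac:(lia)).
    assert (Hf : 0 <= INR (fact n) / INR (fact (n - j))).
    { pose proof (fact_pos_R n); pose proof (fact_pos_R (n - j)).
      left; apply Rdiv_lt_0_compat; lra. }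
    assert (Hnj2 : INR (n - j) <= exp (ln (INR n) - INR j / INR n)).
    { rewrite Hnj. pose proof (exp_ineq1_le (- (INR j / INR n))).
      unfold Rminus at 2. rewrite exp_plus, exp_ln by lra.
      replace (INR n - INR j) with (INR n * (1 + - (INR j / INR n))) by (field; lra).
      apply Rmult_le_compat_l; lra. }
    eapply Rle_trans.
    { apply Rmult_le_compat; [exact Hf| lra | exact IH' | exact Hnj2]. }
    rewrite <- exp_plus. apply exp_le_mono. rewrite S_INR.
    right. field. lra.
Qed.

Lemma A_pos (n j : nat) : 0 <= A n j.
Proof.
  unfold A. pose proof (fact_pos_R j). pose proof (exp_pos (- 2 * INR j * ln (INR n) * (1 - INR j / INR n) - 2 * INR j)).
  apply Rmult_le_pos; [apply Rmult_le_pos|lra].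
  - apply pow2_ge_0.
  - left; apply Rinv_0_lt_compat; lra.
Qed.

Lemma A_ratio (n j : nat) : (S j <= n)%nat ->
  A n (S j) = A n j * (INR (n - j) ^ 2 / INR (S j) *
     exp (- 2 * ln (INR n) * (1 - (2 * INR j + 1) / INR n) - 2)).
Proof.
  intro H.
  assert (HN : 0 < INR n) by (apply lt_0_INR; lia).
  unfold A.
  replace (- 2 * INR (S j) * ln (INR n) * (1 - INR (S j) / INR n) - 2 * INR (S j))
    with ((- 2 * INR j * ln (INR n) * (1 - INR j / INR n) - 2 * INR j) +
          (- 2 * ln (INR n) * (1 - (2 * INR j + 1) / INR n) - 2))
    by (rewrite S_INR; field; lra).
  rewrite exp_plus.
  rewrite (fact_split n j H).
  replace (fact (S j)) with (S j * fact j)%nat by reflexivity.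
  rewrite mult_INR.
  pose proof (fact_pos_R j). pose proof (fact_pos_R (n - S j)).
  assert (0 < INR (n - j)) by (apply lt_0_INR; lia).
  assert (0 < INR (S j)) by (apply lt_0_INR; lia).
  field. lra.
Qed.

Lemma A1_eq (n : nat) : (0 < n)%nat -> A n 1 = exp (2 * ln (INR n) / INR n - 2).
Proof.
  intro Hn. assert (HN : 0 < INR n) by (apply lt_0_INR; lia).
  unfold A. replace (fact (n - 1)) with (fact (n - 1)) by reflexivity.
  replace (INR (fact n)) with (INR n * INR (fact (n - 1))).
  2:{ rewrite <- mult_INR. f_equal. destruct n; [lia|]. simpl. rewrite Nat.sub_0_r. reflexivity. }
  pose proof (fact_pos_R (n - 1)).
  replace (INR n * INR (fact (n - 1)) / INR (fact (n - 1))) with (exp (ln (INR n))) by (rewrite exp_ln by lra; field; lra).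
  simpl INR. simpl fact. simpl INR.
  rewrite <- exp_mul_pow. replace (/ (1)) with 1 by field. rewrite Rmult_1_r. rewrite <- exp_plus.
  f_equal. simpl INR. field. lra.
Qed.

Lemma L_ge2 (n : nat) : (10 <= n)%nat -> 2 <= ln (INR n).
Proof.
  intro Hn. assert (HN : 10 <= INR n) by (replace 10 with (INR 10) by (simpl; ring); apply le_INR; lia).
  rewrite <- (ln_exp 2). apply ln_le_mono. apply exp_pos.
  replace 2 with (INR 2 * 1) by (simpl; ring). rewrite exp_mul_pow.
  pose proof exp_le_3. pose proof (exp_pos 1). simpl. nra.
Qed.

Lemma ln4_le : ln 4 <= 14/10.
Proof.
  rewrite <- (ln_exp (14/10)). apply ln_le_mono. lra. apply e14_lb.
Qed.

Lemma A_second (n j : nat) : (10 <= n)%nat -> (1 <= j)%nat -> (n <= 4 * j)%nat -> (2 * j <= n)%nat ->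
  A n j <= exp (-1) * exp (- (1/2)) ^ j.
Proof.
  intros Hn Hj1 H4 H2.
  assert (HN : 10 <= INR n) by (replace 10 with (INR 10) by (simpl; ring); apply le_INR; lia).
  assert (HJ : 1 <= INR j) by (replace 1 with (INR 1) by reflexivity; apply le_INR; lia).
  assert (H4R : INR n <= 4 * INR j) by (replace 4 with (INR 4) by (simpl; ring); rewrite <- mult_INR; apply le_INR; lia).
  assert (H2R : 2 * INR j <= INR n) by (replace 2 with (INR 2) by (simpl; ring); rewrite <- mult_INR; apply le_INR; lia).
  set (L := ln (INR n)).
  assert (HL : 2 <= L) by (apply L_ge2; lia).
  pose proof (F_bound n j ltac:(lia) ltac:(lia)) as HF.
  pose proof (fact_lb j Hj1) as HZ.
  fold L in HF.
  set (x := INR j / INR n).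
  assert (Hx1 : 1/4 <= x) by (unfold x; apply Rmult_le_reg_r with (INR n); [lra|]; field_simplify; lra).
  assert (Hx2 : x <= 1/2) by (unfold x; apply Rmult_le_reg_r with (INR n); [lra|]; field_simplify; lra).
  assert (Hlnj : ln (INR j) = ln x + L).
  { unfold x, L. rewrite ln_div by lra. ring. }
  assert (Hlnx : 1 - / (4 * x) - 14/10 <= ln x).
  { pose proof (ln_ge_1inv (4 * x) ltac:(lra)). rewrite ln_mult in H by lra.
    pose proof ln4_le. lra. }
  set (y := / (4 * x)) in Hlnx.
  assert (Hxy : 4 * x * y = 1) by (unfold y; field; lra).
  assert (Hy : 0 < y) by (unfold y; apply Rinv_0_lt_compat; lra).
  assert (HK : 2 * x * L - x + / INR n - ln (INR j) - 1/2 <= 0).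
  { rewrite Hlnj.
    assert ((2 * x - 1) * L <= (2 * x - 1) * 2) by nra.
    assert (/ INR n <= 1/10) by (apply Rle_trans with (/ 10); [apply Rinv_le_contravar; lra|lra]).
    assert (3 * x + y <= 2) by nra.
    nra. }
  unfold A.
  assert (Hf : 0 <= INR (fact n) / INR (fact (n - j))).
  { pose proof (fact_pos_R n); pose proof (fact_pos_R (n - j)).
    left; apply Rdiv_lt_0_compat; lra. }
  fold L.
  set (Y := INR j * L - INR j * (INR j - 1) / (2 * INR n)) in HF.
  set (Z := INR j * ln (INR j) - INR j + 1) in HZ.
  set (X := - 2 * INR j * L * (1 - INR j / INR n) - 2 * INR j).
  pose proof (exp_pos Y). pose proof (exp_pos Z). pose proof (exp_pos X).
  apply Rle_trans with (exp Y ^ 2 * / exp Z * exp X).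
  { apply Rmult_le_compat_r; [lra|].
    apply Rmult_le_compat.
    - apply pow2_ge_0.
    - left; apply Rinv_0_lt_compat, fact_pos_R.
    - apply pow_incr; lra.
    - apply Rinv_le_contravar; lra. }
  rewrite <- exp_Ropp, <- exp_mul_pow, <- (exp_mul_pow (-(1/2)) j), <- !exp_plus.
  apply exp_le_mono.
  unfold Y, Z, X. unfold x in HK.
  assert (Hp : 0 <= INR j * - (2 * (INR j / INR n) * L - INR j / INR n + / INR n - ln (INR j) - 1 / 2)).
  { apply Rmult_le_pos; lra. }
  replace (INR 2) with 2 by (simpl; ring).

  apply Rminus_le.
  match goal with |- ?a - ?b <= 0 => replace (a - b) with (- (INR j * - (2 * (INR j / INR n) * L - INR j / INR n + / INR n - ln (INR j) - 1 / 2))) by (field; lra) end.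
  lra.
Qed.

Lemma ratio_bound (n j : nat) : (4 * S j <= n)%nat ->
  INR (n - j) ^ 2 / INR (S j) *
     exp (- 2 * ln (INR n) * (1 - (2 * INR j + 1) / INR n) - 2) <= 4 * exp (-2).
Proof.
  intro H.
  set (M := (4 * S j)%nat).
  assert (HMR : INR M = 4 * (INR j + 1)).
  { unfold M. rewrite mult_INR. replace (INR 4) with 4 by (simpl; ring). rewrite S_INR. ring. }
  assert (HJ : 0 <= INR j) by apply pos_INR.
  assert (HN : INR M <= INR n) by (apply le_INR; lia).
  assert (Hnj : INR (n - j) = INR n - INR j) by (apply minus_INR; lia).
  set (L := ln (INR n)).
  assert (Hdec := lnn_decr M n ltac:(unfold M; lia) H). fold L in Hdec.
  assert (HlnM : 0 <= ln (INR M)) by (rewrite <- ln_1; apply ln_le_mono; lra).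
  assert (Hkey : (4 * INR j + 2) * L / INR n <= ln (INR M)).
  { apply Rle_trans with ((4 * INR j + 2) * (ln (INR M) / INR M)).
    - unfold Rdiv in *. rewrite Rmult_assoc. apply Rmult_le_compat_l; lra.
    - set (lm := ln (INR M)) in *. rewrite HMR. unfold Rdiv.
      assert (lm * / (4 * (INR j + 1)) * (4 * INR j + 2) <= lm * / (4 * (INR j + 1)) * (4 * (INR j + 1))).
      { apply Rmult_le_compat_l; [|lra]. apply Rmult_le_pos; [lra|]. left; apply Rinv_0_lt_compat; lra. }
      replace (lm * / (4 * (INR j + 1)) * (4 * (INR j + 1))) with lm in H0 by (field; lra).
      lra. }
  assert (Hsq : INR (n - j) ^ 2 <= exp (2 * L)).
  { replace (2 * L) with (INR 2 * L) by (simpl; ring). rewrite exp_mul_pow. unfold L. rewrite exp_ln by lra.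
    apply pow_incr. rewrite Hnj. lra. }
  pose proof (exp_pos (- 2 * L * (1 - (2 * INR j + 1) / INR n) - 2)).
  assert (HS : 0 < INR (S j)) by (rewrite S_INR; lra).
  apply Rle_trans with (exp (2 * L) / INR (S j) * exp (- 2 * L * (1 - (2 * INR j + 1) / INR n) - 2)).
  { apply Rmult_le_compat_r; [lra|]. unfold Rdiv. apply Rmult_le_compat_r; [left; apply Rinv_0_lt_compat; lra|lra]. }
  replace (exp (2 * L) / INR (S j) * exp (- 2 * L * (1 - (2 * INR j + 1) / INR n) - 2))
    with (exp ((4 * INR j + 2) * L / INR n) * exp (-2) / INR (S j)).
  2:{ rewrite <- !exp_plus. unfold Rdiv. rewrite !Rmult_assoc, (Rmult_comm (/ INR (S j))), <- !Rmult_assoc.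
      f_equal. rewrite <- exp_plus. f_equal. field. lra. }
  apply Rle_trans with (INR M * exp (-2) / INR (S j)).
  { unfold Rdiv. apply Rmult_le_compat_r; [left; apply Rinv_0_lt_compat; lra|].
    apply Rmult_le_compat_r; [left; apply exp_pos|].
    rewrite <- (exp_ln (INR M)) by lra. apply exp_le_mono. exact Hkey. }
  rewrite HMR, S_INR. right. field. lra.
Qed.

Lemma A1_bound (n : nat) : (10 <= n)%nat -> A n 1 <= 16/10 * exp (-2).
Proof.
  intro Hn. rewrite A1_eq by lia.
  pose proof (lnn_decr 10 n ltac:(lia) Hn) as Hd.
  replace (INR 10) with 10 in Hd by (simpl; ring).
  set (t := exp (ln 10 / 5)).
  assert (Ht5 : t ^ 5 = 10).
  { unfold t. rewrite <- exp_mul_pow. replace (INR 5 * (ln 10 / 5)) with (ln 10) by (simpl; field).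
    apply exp_ln; lra. }
  assert (Ht : t <= 16/10).
  { destruct (Rle_lt_dec t (16/10)) as [h|h]; [exact h|].
    assert (Hp : (16/10)^5 <= t^5) by (apply pow_incr; lra).
    rewrite Ht5 in Hp. simpl in Hp. lra. }
  apply Rle_trans with (exp (ln 10 / 5 - 2)).
  { apply exp_le_mono. unfold Rdiv in *. lra. }
  unfold Rminus. rewrite exp_plus. fold t. apply Rmult_le_compat_r; [left; apply exp_pos|lra].
Qed.

Lemma A_first (n j : nat) : (10 <= n)%nat -> (1 <= j)%nat -> (4 * j <= n)%nat ->
  A n j <= A n 1 * (4 * exp (-2)) ^ (j - 1).
Proof.
  intros Hn Hj. induction Hj as [|j Hj IH]; intro H4.
  - simpl. lra.
  - rewrite A_ratio by lia.
    replace (S j - 1)%nat with (S (j - 1)) by lia. simpl pow.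
    pose proof (ratio_bound n j H4).
    assert (0 <= INR (n - j) ^ 2 / INR (S j) *
     exp (- 2 * ln (INR n) * (1 - (2 * INR j + 1) / INR n) - 2)).
    { apply Rmult_le_pos; [|left; apply exp_pos]. unfold Rdiv. apply Rmult_le_pos; [apply pow2_ge_0|].
      left; apply Rinv_0_lt_compat, lt_0_INR; lia. }
    pose proof (A_pos n j).
    specialize (IH ltac:(lia)).
    apply Rle_trans with (A n 1 * (4 * exp (-2)) ^ (j - 1) * (4 * exp (-2))).
    + apply Rmult_le_compat; lra.
    + right; ring.
Qed.

Lemma geo_sum (f : nat -> R) (c q : R) (a len : nat) : 0 <= q < 1 -> 0 <= c ->
  (forall j, (a <= j < a + len)%nat -> f j <= c * q ^ j) ->
  fold_right Rplus 0 (map f (seq a len)) <= c * q ^ a / (1 - q).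
Proof.
  intros Hq Hc. revert a. induction len as [|len IH]; intros a Hf.
  - simpl. apply Rmult_le_pos; [apply Rmult_le_pos; [lra|apply pow_le; lra]|].
    left; apply Rinv_0_lt_compat; lra.
  - simpl. pose proof (Hf a ltac:(lia)).
    assert (IH' := IH (S a) ltac:(intros; apply Hf; lia)).
    simpl in IH'.
    apply Rle_trans with (c * q ^ a + c * (q * q ^ a) / (1 - q)); [lra|].
    right. field. lra.
Qed.

Theorem lemma4p7 (n : nat) (hn : (10 <= n)%nat) :
  sum_range 1 (Nat.div n 4) (A n) <= 2 / 3 /\
  sum_range (Nat.div (n + 3) 4) (Nat.div n 2) (A n) <= 1 / 4.
Proof.
  pose proof e_lb as He.
  assert (HE : exp 1 = exp 1) by reflexivity.
  split.
  - set (w := exp (-2)).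
    assert (Hw : w * (exp 1 ^ 2) = 1).
    { unfold w. replace (exp 1 ^ 2) with (exp (INR 2 * 1)) by (rewrite exp_mul_pow; reflexivity).
      rewrite <- exp_plus. replace (-2 + INR 2 * 1) with 0 by (simpl; ring). apply exp_0. }
    assert (Hw0 : 0 < w) by apply exp_pos.
    assert (Hwb : w <= 1/7) by (simpl in Hw; nra).
    pose proof (A1_bound n hn) as HA1. fold w in HA1.
    unfold sum_range.
    eapply Rle_trans.
    { apply (geo_sum (A n) (A n 1 / (4 * w)) (4 * w)).
      - lra.
      - unfold Rdiv. apply Rmult_le_pos; [apply A_pos|]. left; apply Rinv_0_lt_compat; lra.
      - intros j Hj. eapply Rle_trans; [apply (A_first n j hn ltac:(lia))|].
        + assert (j <= n / 4)%nat by lia. pose proof (Nat.mul_div_le n 4). lia.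
        + destruct j as [|j']; [lia|]. replace (S j' - 1)%nat with j' by lia. simpl pow. fold w. right. field. lra. }
    simpl pow. replace (A n 1 / (4 * w) * (4 * w * 1) / (1 - 4 * w)) with (A n 1 / (1 - 4 * w)) by (field; lra).
    apply Rle_trans with (16/10 * w / (1 - 4 * w)).
    + unfold Rdiv. apply Rmult_le_compat_r; [left; apply Rinv_0_lt_compat; lra|lra].
    + apply Rmult_le_reg_r with (1 - 4 * w). lra.
      replace (16/10 * w / (1 - 4 * w) * (1 - 4 * w)) with (16/10 * w) by (field; lra). lra.
  - set (q := exp (- (1/2))).
    assert (Hq2 : q ^ 2 * exp 1 = 1).
    { unfold q. rewrite <- exp_mul_pow, <- exp_plus. replace (INR 2 * - (1/2) + 1) with 0 by (simpl; field). apply exp_0. }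
    assert (Hq0 : 0 < q) by apply exp_pos.
    assert (He1 : exp (-1) = q ^ 2).
    { unfold q. rewrite <- exp_mul_pow. f_equal. simpl; field. }
    assert (Hq : q <= 61/100) by (simpl in Hq2; nra).
    unfold sum_range.
    set (a := ((n + 3) / 4)%nat).
    assert (Ha3 : (3 <= a)%nat) by (unfold a; apply (Nat.div_le_lower_bound); lia).
    eapply Rle_trans.
    { apply (geo_sum (A n) (exp (-1)) q).
      - lra.
      - left; apply exp_pos.
      - intros j Hj. apply A_second; try lia.
        + assert (4 * a <= 4 * j)%nat by lia. pose proof (Nat.div_mod (n+3) 4 ltac:(lia)).
          pose proof (Nat.mod_upper_bound (n+3) 4 ltac:(lia)). fold a in H0, H1. lia.
        + assert (j <= n / 2)%nat by lia. pose proof (Nat.mul_div_le n 2). lia. }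
    rewrite He1.
    replace a with (3 + (a - 3))%nat by lia. rewrite pow_add.
    assert (Hqa : q ^ (a - 3) <= 1) by (rewrite <- (pow1 (a - 3)); apply pow_incr; lra).
    assert (Hqa0 : 0 <= q ^ (a - 3)) by (apply pow_le; lra).
    assert (Hq5 : q ^ 5 <= (61/100) ^ 5) by (apply pow_incr; lra).
    simpl in Hq5.
    assert (Hq3 : 0 <= q ^ 2 * q ^ 3) by (apply Rmult_le_pos; apply pow_le; lra).
    apply Rle_trans with (q ^ 2 * q ^ 3 / (1 - q)).
    { unfold Rdiv. apply Rmult_le_compat_r; [left; apply Rinv_0_lt_compat; lra|].
      rewrite <- Rmult_assoc. rewrite <- (Rmult_1_r (q ^ 2 * q ^ 3)) at 2. apply Rmult_le_compat_l; lra. }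
    apply Rmult_le_reg_r with (1 - q). lra.
    replace (q ^ 2 * q ^ 3 / (1 - q) * (1 - q)) with (q ^ 2 * q ^ 3) by (field; lra).
    simpl. nra.
Qed.
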